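(* Let $p\in[1,\infty)$, $w$ a weight sequence, $a\in L_{p,w}$ and $i\in\mathbb{N}$. Then $$S_i(a)+\tilde S_i(a)\le\|a\|_{p,w}^p=H_i(a)+\tilde H_i(a)=W_i(a)+\tilde W_i(a)\le S_i(a)+T_i(a).$$
   Context: A weight sequence is a sequence $w=(w_i)$ of positive reals with $w_1=1\ge w_2\ge\dots$, $w_i\to0$, and $\sum_i w_i=+\infty$. For a real sequence $a$, $\|a\|_{p,w}=\sup_{\sigma}\big(\sum_{i=1}^\infty |a_{\sigma_i}|^p w_i\big)^{1/p}$ over all permutations $\sigma$ of $\mathbb{N}$; $L_{p,w}$ is the set of real sequences with finite norm. For $a\in L_{p,w}$, let $\sigma=\sigma^a:\mathbb{N}\to\mathbb{N}$ be defined recursively: $\sigma_i$ is the element $j$ of $\mathbb{N}\setminus\{\sigma_1,\dots,\sigma_{i-1}\}$ with $|a_j|$ maximal, taking the smallest such index in case of ties (for $a\in L_{p,w}$ this is well defined, $\sigma$ is injective and $|a_{\sigma_i}|$ is nonincreasing). Write $\sigma^{-1}$ for its inverse on $\sigma(\mathbb{N})$, with the convention $w_{\sigma^{-1}_j}:=0$ if $j\notin\sigma(\mathbb{N})$. Definitions: $S_i(a)=\|(a_1,\dots,a_i,0,0,\dots)\|_{p,w}^p$; $\tilde S_i(a)=\sup_{\tau}\sum_{j=1}^\infty|a_{i+\tau_j}|^p w_{i+j}$ over permutations $\tau$ of $\mathbb{N}$ (the $p$-th power of the Lorentz-type norm of the tail $(a_{i+1},a_{i+2},\dots)$ with weights $(w_{i+1},w_{i+2},\dots)$);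 $H_i(a)=\sum_{j=1}^i|a_j|^p w_{\sigma^{-1}_j}$; $\tilde H_i(a)=\sum_{j=i+1}^\infty|a_j|^p w_{\sigma^{-1}_j}$; $W_i(a)=\sum_{j=1}^i|a_{\sigma_j}|^p w_j$; $\tilde W_i(a)=\sum_{j=i+1}^\infty|a_{\sigma_j}|^p w_j$; $T_i(a)=\|(a_{i+1},a_{i+2},\dots)\|_{p,w}^p$. *)

(* Defs.v *)
(* Sequences are 0-indexed: paper's a_k is (a (k-1)). *)
From HB Require Import structures.
From mathcomp Require Import all_boot all_order all_algebra.
From mathcomp Require Import all_classical all_reals all_analysis.
Set Implicit Arguments. Unset Strict Implicit. Unset Printing Implicit Defensive.
Import Order.TTheory GRing.Theory Num.Theory.
Local Open Scope classical_set_scope.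
Local Open Scope ring_scope.

Section Lorentz.
Variable R : realType.

Definition weight_seq (w : nat -> R) : Prop :=
  [/\ w 0%N = 1, (forall n, 0 < w n), (forall n, w n.+1 <= w n),
      w @ \oo --> 0 & (\sum_(k <oo) (w k)%:E = +oo)%E].

Definition lnormp (p : R) (w a : nat -> R) : \bar R :=
  ereal_sup [set (\sum_(k <oo) ((`|a (s k)| `^ p) * w k)%:E)%E
            | s in [set s : nat -> nat | bijective s]].

Definition in_Lpw (p : R) (w a : nat -> R) : Prop := (lnormp p w a < +oo)%E.

Definition greedy_pick (a : nat -> R) (prev : seq nat) : nat :=
  xget 0%N [set j | j \notin prev
                 /\ (forall k, k \notin prev -> `|a k| <= `|a j|)
                 /\ (forall k, (k < j)%N -> k \notin prev -> `|a k| < `|a j|)].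

Fixpoint greedy_prefix (a : nat -> R) (n : nat) : seq nat :=
  match n with
  | 0%N => [::]
  | n'.+1 => rcons (greedy_prefix a n') (greedy_pick a (greedy_prefix a n'))
  end.

(* sigma a i = paper's sigma_(i+1), i.e. 0-based *)
Definition sigma (a : nat -> R) (i : nat) : nat := nth 0%N (greedy_prefix a i.+1) i.

(* w_{sigma^{-1}_j}, with the convention 0 if j is not in the range of sigma *)
Definition w_sinv (a w : nat -> R) (j : nat) : R :=
  match pselect (exists i, sigma a i = j) with
  | left h => w (projT1 (cid h))
  | right _ => 0
  end.

Definition S_ (p : R) (w a : nat -> R) (i : nat) : \bar R :=
  lnormp p w (fun j => if (j < i)%N then a j else 0).
Definition St_ (p : R) (w a : nat -> R) (i : nat) : \bar R :=
  lnormp p (fun j => w (i + j)%N) (fun j => a (i + j)%N).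
Definition T_ (p : R) (w a : nat -> R) (i : nat) : \bar R :=
  lnormp p w (fun j => a (i + j)%N).
Definition H_ (p : R) (w a : nat -> R) (i : nat) : \bar R :=
  (\sum_(0 <= j < i) ((`|a j| `^ p) * w_sinv a w j)%:E)%E.
Definition Ht_ (p : R) (w a : nat -> R) (i : nat) : \bar R :=
  (\sum_(i <= j <oo) ((`|a j| `^ p) * w_sinv a w j)%:E)%E.
Definition W_ (p : R) (w a : nat -> R) (i : nat) : \bar R :=
  (\sum_(0 <= j < i) ((`|a (sigma a j)| `^ p) * w j)%:E)%E.
Definition Wt_ (p : R) (w a : nat -> R) (i : nat) : \bar R :=
  (\sum_(i <= j <oo) ((`|a (sigma a j)| `^ p) * w j)%:E)%E.

End Lorentz.

(* Main.v *)
Require Import Defs.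
From HB Require Import structures.
From mathcomp Require Import all_boot all_order all_algebra.
From mathcomp Require Import all_classical all_reals all_analysis.
Import Order.TTheory GRing.Theory Num.Theory.
Local Open Scope ring_scope.
Lemma abel_le (R : realType) (b c w : nat -> R) n :
  (forall k, 0 <= w k) -> (forall k, w k.+1 <= w k) ->
  (forall k, (k < n)%N -> \sum_(0 <= j < k.+1) b j <= \sum_(0 <= j < k.+1) c j) ->
  \sum_(0 <= k < n) b k * w k <= \sum_(0 <= k < n) c k * w k.
Proof.
move=> w0 wd H.
case: n H => [|n] H; first by rewrite !big_geq.
rewrite -subr_ge0 -sumrB.
have: (\sum_(0 <= j < n.+1) (c j - b j)) * w n <= \sum_(0 <= k < n.+1) (c k * w k - b k * w k).
  elim: n H => [|n IH] H.
    by rewrite !big_nat1 mulrBl.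
  rewrite big_nat_recr //= [X in _ <= X]big_nat_recr //=.
  have IH' := IH (fun k hk => H k (ltnW hk)).
  rewrite mulrDl -mulrBl; apply: lerD => //.
  apply: le_trans IH'; apply: ler_wpM2l; last exact: wd.
  by rewrite sumrB subr_ge0; apply: H.
apply: le_trans; apply: mulr_ge0 => //.
by rewrite sumrB subr_ge0; apply: H.
Qed.

Definition tp (u v z : nat) : nat := if z == u then v else if z == v then u else z.

Lemma tpK u v : cancel (tp u v) (tp u v).
Proof.
move=> z; rewrite /tp.
case: (eqVneq z u) => [->|zu]; first by rewrite eqxx; case: eqVneq.
case: (eqVneq z v) => [->|zv]; first by rewrite eqxx.
by rewrite (negbTE zu) (negbTE zv).
Qed.

Lemma ext_bij (e : seq nat) : uniq e ->
  exists s : nat -> nat, bijective s /\ forall m, (m < size e)%N -> s m = nth 0%N e m.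
Proof.
elim/last_ind: e => [_|e x IH].
  by exists id; split => //; exists id.
rewrite rcons_uniq => /andP[xe ue].
have [s [bs hs]] := IH ue.
exists (tp (s (size e)) x \o s); split.
  apply: bij_comp => //; exists (tp (s (size e)) x); exact: tpK.
move=> m; rewrite size_rcons ltnS leq_eqVlt => /orP[/eqP ->|me].
  by rewrite /= nth_rcons ltnn eqxx /tp eqxx.
rewrite /= nth_rcons me -hs // /tp.
have inj := bij_inj bs.
case: eqVneq => [/inj em|_]; first by rewrite em ltnn in me.
case: eqVneq => [hx|//]; exfalso.
by move: xe; rewrite -hx hs // mem_nth.
Qed.

Lemma sorted_nth_ge (K : seq nat) j m :
  sorted ltn K -> (forall k, k \in K -> (j <= k)%N) -> (m < size K)%N ->
  (j + m <= nth 0%N K m)%N.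
Proof.
elim: K j m => [//|k K IH] j m /= sK hK.
case: m => [_|m] /=; first by rewrite addn0 hK // mem_head.
rewrite ltnS => hm; rewrite addnS -addSn; apply: IH => //.
  exact: path_sorted sK.
move=> k' hk'; apply: leq_ltn_trans (hK k (mem_head _ _)) _.
have := order_path_min ltn_trans sK => /allP /(_ k' hk').
done.
Qed.

Lemma filter_iota_nth (P : pred nat) n m :
  (m < size [seq k <- iota 0 n | P k])%N -> (m <= nth 0%N [seq k <- iota 0 n | P k] m)%N.
Proof.
move=> hm; have := @sorted_nth_ge [seq k <- iota 0 n | P k] 0 m.
apply => //.
  by apply: sorted_filter; [exact: ltn_trans | exact: iota_ltn_sorted].
Qed.
Lemma sum_split (R : realType) (F : nat -> R) (P : pred nat) s :
  \sum_(k <- s) F k = \sum_(k <- [seq k <- s | P k]) F k + \sum_(k <- [seq k <- s | ~~ P k]) F k.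
Proof. by rewrite (bigID P) /= !big_filter. Qed.

Lemma fin_between (R : realType) (x L : \bar R) : L \is a fin_num -> (0 <= x)%E -> (x <= L)%E -> x \is a fin_num.
Proof.
move=> hL x0 xL; rewrite ge0_fin_numE //; apply: le_lt_trans xL _.
by move: hL; rewrite fin_numElt => /andP[].
Qed.

Lemma sup_add (R : realType) (A B : set (\bar R)) (L : \bar R) : L \is a fin_num ->
  (exists x, A x) -> (exists y, B y) ->
  (forall x, A x -> 0 <= x)%E -> (forall y, B y -> 0 <= y)%E ->
  (forall x y, A x -> B y -> x + y <= L)%E -> (ereal_sup A + ereal_sup B <= L)%E.
Proof.
move=> hL [x0 Ax0] [y0 By0] A0 B0 H.
have h1 : forall y, B y -> (ereal_sup A + y <= L)%E.
  move=> y By; rewrite -lee_suber_addr //; apply: ge_ereal_sup => x Ax.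
  by rewrite lee_suber_addr //; apply: H.
have sA0 : (0 <= ereal_sup A)%E by apply: le_trans (A0 _ Ax0) (ereal_sup_ubound Ax0).
have sAL : (ereal_sup A <= L)%E.
  apply: le_trans (h1 _ By0); apply: lee_paddr => //; exact: B0.
have sAf : ereal_sup A \is a fin_num by apply: fin_between sA0 sAL.
rewrite addeC -lee_suber_addr //; apply: ge_ereal_sup => y By.
by rewrite lee_suber_addr // addeC; apply: h1.
Qed.

Section G.
Variable R : realType.
Variables (p : R) (w a : nat -> R).
Hypothesis p1 : 1 <= p.
Hypothesis w0 : forall n, 0 < w n.
Hypothesis wd : forall n, w n.+1 <= w n.
Hypothesis ws : (\sum_(k <oo) (w k)%:E = +oo)%E.
Hypothesis La : in_Lpw p w a.

Lemma p0 : 0 <= p. Proof. exact: le_trans p1. Qed.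

Lemma powmono (u v : R) : 0 <= u -> u <= v -> u `^ p <= v `^ p.
Proof.
move=> u0 uv; apply: (ge0_ler_powR p0) => //; rewrite nnegrE //.
exact: le_trans uv.
Qed.

Lemma ser_le (u : nat -> R) (L : \bar R) : (forall k, 0 <= u k) ->
  (forall n, ((\sum_(0 <= k < n) u k)%:E <= L)%E) -> (\sum_(k <oo) (u k)%:E <= L)%E.
Proof.
move=> u0 h; apply: lime_le.
  by apply: is_cvg_nneseries => k _ _; rewrite lee_fin.
by apply: nearW => n; rewrite sumEFin.
Qed.

Lemma ser_ge (u : nat -> R) n : (forall k, 0 <= u k) ->
  ((\sum_(0 <= k < n) u k)%:E <= \sum_(k <oo) (u k)%:E)%E.
Proof.
move=> u0; rewrite -sumEFin; apply: nneseries_lim_ge => k _ _; by rewrite lee_fin.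
Qed.

Lemma lnorm_ge (v x : nat -> R) e : (forall k, 0 <= v k) -> uniq e ->
  ((\sum_(0 <= m < size e) `|x (nth 0%N e m)| `^ p * v m)%:E <= lnormp p v x)%E.
Proof.
move=> v0 ue; have [s [bs hs]] := @ext_bij e ue.
rewrite /lnormp; apply: le_trans; last first.
  by apply: ereal_sup_ubound; exists s.
rewrite (@eq_big_nat _ _ _ 0 (size e) _ (fun m => `|x (s m)| `^ p * v m)); last first.
  by move=> m /andP[_ hm]; rewrite hs.
by apply: ser_ge => k; apply: mulr_ge0 => //; exact: powR_ge0.
Qed.

Lemma lnorm_ge0 (v x : nat -> R) : (forall k, 0 <= v k) -> (0 <= lnormp p v x)%E.
Proof.
move=> v0; have := @lnorm_ge v x [::] v0 isT.
by rewrite big_geq.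
Qed.

Lemma w0' k : 0 <= w k. Proof. exact: ltW. Qed.

Lemma La_fin : lnormp p w a \is a fin_num.
Proof. by rewrite ge0_fin_numE //; apply: lnorm_ge0; exact: w0'. Qed.

Lemma maxfold (e : seq nat) j : j \in e -> (j <= foldr maxn 0 e)%N.
Proof.
elim: e => [//|k e IH]; rewrite in_cons => /orP[/eqP ->|/IH h] /=.
  by rewrite leq_maxl.
by rewrite (leq_trans h) // leq_maxr.
Qed.

Lemma fresh (e : seq nat) : (foldr maxn 0 e).+1 \notin e.
Proof. by apply/negP => /maxfold; rewrite ltnn. Qed.

Lemma decay d : 0 < d -> exists N, forall k, (N <= k)%N -> `|a k| < d.
Proof.
move=> d0; apply/not_existsP => H.
have H' : forall N, exists k, (N <= k)%N /\ d <= `|a k|.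
  move=> N; have /existsNP [k /not_implyP [hk hn]] := H N.
  by exists k; split => //; rewrite leNgt; apply/negP.
have E : forall n, exists e, [/\ uniq e, size e = n & forall j, j \in e -> d <= `|a j|].
  elim => [|n [e [ue se he]]]; first by exists [::].
  have [k [hk dk]] := H' (foldr maxn 0 e).+1.
  have ke : k \notin e by apply/negP => /maxfold; rewrite leqNgt hk.
  exists (rcons e k); split.
  - by rewrite rcons_uniq ke.
  - by rewrite size_rcons se.
  - by move=> j; rewrite mem_rcons in_cons => /orP[/eqP ->|/he].
have dp : 0 < d `^ p by apply: powR_gt0.
have : (\sum_(k <oo) (w k)%:E <= (fine (lnormp p w a) / d `^ p)%:E)%E.
  apply: ser_le; first exact: w0'.
  move=> n; have [e [ue se he]] := E n.
  rewrite lee_fin ler_pdivlMr // -lee_fin fineK; last exact: La_fin.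
  apply: (le_trans _ (lnorm_ge w a e w0' ue)); rewrite lee_fin se mulr_suml.
  apply: ler_sum_nat => m /andP[_ hm]; rewrite mulrC; apply: ler_wpM2r; first exact: w0'.
  apply: powmono; first exact: ltW.
  by apply: he; rewrite mem_nth // se.
by rewrite ws leye_eq.
Qed.

Lemma finmax (N : nat) (Q : pred nat) k0 : (k0 < N)%N -> Q k0 ->
  exists j, Q j /\ forall k, (k < N)%N -> Q k -> `|a k| <= `|a j|.
Proof.
elim: N k0 => [//|N IH] k0 hk0 Qk0.
case: (pselect (exists k, (k < N)%N /\ Q k)) => [[k [kN Qk]]|no].
  have [j [Qj hj]] := IH k kN Qk.
  case: (boolP (Q N && (`|a j| < `|a N|))) => [/andP[QN lt]|nlt].
    exists N; split => // k' hk' Qk'; move: hk'; rewrite ltnS leq_eqVlt => /orP[/eqP ->//|hk'].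
    exact: le_trans (hj k' hk' Qk') (ltW lt).
  exists j; split => // k' hk' Qk'; move: hk'; rewrite ltnS leq_eqVlt => /orP[/eqP ek|hk'].
    by move: nlt Qk'; rewrite ek => nlt QN; move: nlt; rewrite QN /= -leNgt.
  exact: hj.
have eN : k0 = N.
  move: hk0; rewrite ltnS leq_eqVlt => /orP[/eqP //|h]; exfalso; apply: no; by exists k0.
exists N; split; first by rewrite -eN.
move=> k; rewrite ltnS leq_eqVlt => /orP[/eqP ->//|kN Qk]; exfalso; apply: no; by exists k.
Qed.

Lemma pick_spec prev : greedy_pick a prev \notin prev /\
  forall k, k \notin prev -> `|a k| <= `|a (greedy_pick a prev)|.
Proof.
have step1 : exists j, j \notin prev /\ forall k, k \notin prev -> `|a k| <= `|a j|.
  case: (pselect (exists k0, k0 \notin prev /\ 0 < `|a k0|)) => [[k0 [nk0 pk0]]|no].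
    have [N hN] := decay _ pk0.
    have k0N : (k0 < N)%N by rewrite ltnNge; apply/negP => /hN; rewrite ltxx.
    have [j [Qj hj]] := @finmax N (fun k => k \notin prev) k0 k0N nk0.
    exists j; split => // k kp; case: (ltnP k N) => [kN|kN]; first exact: hj.
    apply: le_trans (ltW (hN k kN)) _; exact: hj.
  exists (foldr maxn 0 prev).+1; split; first exact: fresh.
  move=> k kp; apply: le_trans (normr_ge0 _); rewrite leNgt; apply/negP => h.
  by apply: no; exists k.
have step2 : exists j, j \notin prev
                 /\ (forall k, k \notin prev -> `|a k| <= `|a j|)
                 /\ (forall k, (k < j)%N -> k \notin prev -> `|a k| < `|a j|).
  have [j0 Qj0] := step1.
  elim/ltn_ind: j0 Qj0 => j IH [jp hj].
  case: (pselect (exists k, (k < j)%N /\ k \notin prev /\ `|a j| <= `|a k|)) =>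
    [[k [kj [kp ajk]]]|no].
    apply: (IH k kj); split => // k' k'p; exact: le_trans (hj k' k'p) ajk.
  exists j; split => //; split => // k kj kp; rewrite ltNge; apply/negP => h.
  by apply: no; exists k.
have := xgetPex 0%N step2; rewrite /greedy_pick.
by move=> [h1 [h2 _]]; split.
Qed.

Lemma size_gp n : size (greedy_prefix a n) = n.
Proof. by elim: n => //= n IH; rewrite size_rcons IH. Qed.

Lemma sigmaE n : sigma a n = greedy_pick a (greedy_prefix a n).
Proof. by rewrite /sigma /= nth_rcons size_gp ltnn eqxx. Qed.

Lemma gp_eq n : greedy_prefix a n = map (sigma a) (iota 0 n).
Proof.
elim: n => // n IH.
have -> : iota 0 n.+1 = iota 0 n ++ [:: n] by rewrite -addn1 iotaD.
by rewrite map_cat cats1 [LHS]/= -sigmaE IH.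

Qed.

Lemma sig_notin n : sigma a n \notin map (sigma a) (iota 0 n).
Proof. by rewrite sigmaE -gp_eq; case: (pick_spec (greedy_prefix a n)). Qed.

Lemma sig_max n j : j \notin map (sigma a) (iota 0 n) -> `|a j| <= `|a (sigma a n)|.
Proof.
rewrite sigmaE -gp_eq => h; case: (pick_spec (greedy_prefix a n)) => _; exact.
Qed.

Lemma sig_inj : injective (sigma a).
Proof.
suff H : forall m n, (m < n)%N -> sigma a m != sigma a n.
  move=> m n e; case: (ltngtP m n) => // h.
    by move: (H _ _ h); rewrite e eqxx.
  by move: (H _ _ h); rewrite e eqxx.
move=> m n mn; apply/negP => /eqP e; move: (sig_notin n).
by rewrite -e map_f // mem_iota.
Qed.

Local Notation sg := (sigma a).

Lemma preS n : map sg (iota 0 n.+1) = rcons (map sg (iota 0 n)) (sg n).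
Proof.
have -> : iota 0 n.+1 = iota 0 n ++ [:: n] by rewrite -addn1 iotaD.
by rewrite map_cat cats1.
Qed.

Lemma topm m : forall n J, uniq J -> size J = m ->
  (forall j, j \in J -> j \notin map sg (iota 0 n)) ->
  \sum_(j <- J) `|a j| `^ p <= \sum_(n <= k < n + m) `|a (sg k)| `^ p.
Proof.
elim: m => [|m IH] n J uJ sJ hJ.
  by rewrite (size0nil sJ) big_nil addn0 big_geq.
rewrite big_ltn; last by rewrite addnS ltnS leq_addr.
rewrite addnS -addSn.
have hJ' : forall j, j \in J -> j != sg n -> j \notin map sg (iota 0 n.+1).
  move=> j jJ jn; rewrite preS mem_rcons in_cons negb_or jn /=; exact: hJ.
case: (boolP (sg n \in J)) => hin.
  rewrite (perm_big _ (perm_to_rem hin)) big_cons; apply: lerD => //.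
  apply: IH.
  - exact: rem_uniq.
  - by rewrite size_rem // sJ.
  - by move=> j; rewrite mem_rem_uniq // => /andP[jn jJ]; apply: hJ'.
move: uJ sJ hJ hJ' hin; case: J => [//|j0 J'] uJ sJ hJ hJ' hin.
rewrite big_cons; apply: lerD.
  apply: powmono; first exact: normr_ge0.
  by apply: sig_max; apply: hJ; rewrite mem_head.
apply: IH.
- by case/andP: uJ.
- by case: sJ.
- move=> j jJ; apply: hJ'; first by rewrite in_cons jJ orbT.
  by apply/negP => /eqP ej; move: hin; rewrite -ej in_cons jJ orbT.
Qed.

Lemma uniq_le e : uniq e ->
  \sum_(0 <= m < size e) `|a (nth 0%N e m)| `^ p * w m
  <= \sum_(0 <= m < size e) `|a (sg m)| `^ p * w m.
Proof.
move=> ue; apply: abel_le; [exact: w0' | exact: wd |].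
move=> k hk.
have sk : size (take k.+1 e) = k.+1 by rewrite size_takel.
have -> : \sum_(0 <= j < k.+1) `|a (nth 0%N e j)| `^ p = \sum_(j <- take k.+1 e) `|a j| `^ p.
  rewrite [RHS](big_nth 0%N) sk; apply: eq_big_nat => j /andP[_ hj].
  by rewrite nth_take.
have := @topm k.+1 0 (take k.+1 e) (take_uniq _ ue) sk.
by rewrite add0n; apply => j _.
Qed.

Lemma lnorm_eq : lnormp p w a = (\sum_(k <oo) (`|a (sg k)| `^ p * w k)%:E)%E.
Proof.
have c0 : forall k, 0 <= `|a (sg k)| `^ p * w k.
  by move=> k; apply: mulr_ge0; [exact: powR_ge0 | exact: w0'].
apply/eqP; rewrite eq_le; apply/andP; split.
  rewrite /lnormp; apply: ge_ereal_sup => _ [s bs <-].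
  apply: ser_le.
    by move=> k; apply: mulr_ge0; [exact: powR_ge0 | exact: w0'].
  move=> n; apply: le_trans (ser_ge _ _ c0).
  have ue : uniq (map s (iota 0 n)) by rewrite map_inj_uniq ?iota_uniq //; exact: bij_inj.
  have := uniq_le _ ue; rewrite size_map size_iota lee_fin => H.
  apply: le_trans H; rewrite le_eqVlt; apply/orP; left; apply/eqP.
  apply: eq_big_nat => m /andP[_ hm]; by rewrite (nth_map 0%N) ?size_iota // nth_iota.
apply: ser_le => // n.
have ue : uniq (map sg (iota 0 n)) by rewrite map_inj_uniq ?iota_uniq //; exact: sig_inj.
apply: le_trans (lnorm_ge w a _ w0' ue).
rewrite size_map size_iota lee_fin le_eqVlt; apply/orP; left; apply/eqP.
apply: eq_big_nat => m /andP[_ hm]; by rewrite (nth_map 0%N) ?size_iota // nth_iota.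
Qed.


Lemma w_anti m m' : (m <= m')%N -> w m' <= w m.
Proof.
move=> h; rewrite -(subnKC h); elim: (m' - m)%N => [|d IH]; first by rewrite addn0.
by rewrite addnS; apply: le_trans (wd _) IH.
Qed.

Lemma filt_le (P : pred nat) (h : nat -> R) n : (forall k, 0 <= h k) ->
  \sum_(k <- [seq k <- iota 0 n | P k]) h k * w k <=
  \sum_(0 <= m < size [seq k <- iota 0 n | P k]) h (nth 0%N [seq k <- iota 0 n | P k] m) * w m.
Proof.
move=> h0; rewrite (big_nth 0%N); apply: ler_sum_nat => m /andP[_ hm].
apply: ler_wpM2l => //; apply: w_anti; exact: filter_iota_nth.
Qed.

Lemma part_le (P : pred nat) (g : nat -> nat) (x : nat -> R) n :
  uniq (map g [seq k <- iota 0 n | P k]) ->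
  (forall k, k \in [seq k <- iota 0 n | P k] -> x (g k) = a (sg k)) ->
  ((\sum_(k <- [seq k <- iota 0 n | P k]) `|a (sg k)| `^ p * w k)%:E <= lnormp p w x)%E.
Proof.
move=> ue hx; set K := [seq k <- iota 0 n | P k].
apply: (le_trans _ (lnorm_ge w x _ w0' ue)).
rewrite lee_fin; apply: (le_trans (filt_le P _ n (fun k => powR_ge0 _ _))).
rewrite size_map le_eqVlt; apply/orP; left; apply/eqP.
apply: eq_big_nat => m /andP[_ hm].
by rewrite (nth_map 0%N) // hx // mem_nth.
Qed.

Lemma WST i : (\sum_(k <oo) (`|a (sg k)| `^ p * w k)%:E <= S_ p w a i + T_ p w a i)%E.
Proof.
apply: ser_le.
  by move=> k; apply: mulr_ge0; [exact: powR_ge0 | exact: w0'].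
move=> n.
rewrite /index_iota subn0.
rewrite (sum_split _ _ (fun k => (sg k < i)%N)) EFinD.
apply: leeD.
  apply: (part_le _ sg).
    by rewrite map_inj_uniq ?filter_uniq ?iota_uniq //; exact: sig_inj.
  by move=> k; rewrite mem_filter => /andP[-> _].
apply: (part_le _ (fun k => (sg k - i)%N)).
  rewrite map_inj_in_uniq ?filter_uniq ?iota_uniq //.
  move=> k k'; rewrite !mem_filter -!leqNgt => /andP[hk _] /andP[hk' _] /= e.
  by apply: sig_inj; rewrite -(subnKC hk) -(subnKC hk') e.
by move=> k; rewrite mem_filter -leqNgt => /andP[hk _]; rewrite subnKC.
Qed.

Lemma W_eq i : lnormp p w a = (W_ p w a i + Wt_ p w a i)%E.
Proof.
rewrite lnorm_eq (nneseries_split 0 i) ?add0n //.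
by move=> k _; rewrite lee_fin; apply: mulr_ge0; [exact: powR_ge0 | exact: w0'].
Qed.

Lemma wsinv_sig k : w_sinv a w (sg k) = w k.
Proof.
rewrite /w_sinv; case: pselect => [h|[]]; last by exists k.
by case: cid => k' /= /sig_inj ->.
Qed.

Lemma wsinv_out j : ~ (exists k, sg k = j) -> w_sinv a w j = 0.
Proof. by rewrite /w_sinv; case: pselect. Qed.

Lemma wsinv_ge0 j : 0 <= w_sinv a w j.
Proof.
case: (pselect (exists k, sg k = j)) => [[k <-]|h].
  by rewrite wsinv_sig; exact: w0'.
by rewrite wsinv_out.
Qed.

Lemma H_ser : (\sum_(k <oo) (`|a (sg k)| `^ p * w k)%:E)%E =
  (\sum_(j <oo) (`|a j| `^ p * w_sinv a w j)%:E)%E.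
Proof.
rewrite !nneseries_esumT; try (by move=> k; rewrite lee_fin; apply: mulr_ge0;
  [exact: powR_ge0 | first [exact: w0' | exact: wsinv_ge0]]).
rewrite [RHS](eq_esum (b := fun j => (if j \in range sg then (`|a j| `^ p * w_sinv a w j)%:E else 0)%E)); last first.
  move=> j _; case: ifPn => // /negP hj; rewrite wsinv_out ?mulr0 //.
  by move=> [k hk]; apply: hj; rewrite inE; exists k.
rewrite -esum_mkcond (reindex_esum _ _ _ _ (inj_bij (in2W sig_inj))).
by apply: eq_esum => k _; rewrite wsinv_sig.
Qed.

Lemma H_eq i : lnormp p w a = (H_ p w a i + Ht_ p w a i)%E.
Proof.
rewrite lnorm_eq H_ser (nneseries_split 0 i) ?add0n //.
by move=> k _; rewrite lee_fin; apply: mulr_ge0; [exact: powR_ge0 | exact: wsinv_ge0].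
Qed.


Lemma pair_part i (s t : nat -> nat) n : injective s -> injective t ->
  ((\sum_(0 <= k < n) `|(fun j => if (j < i)%N then a j else 0) (s k)| `^ p * w k
   + \sum_(0 <= k < n) `|a (i + t k)%N| `^ p * w (i + k)%N)%:E <= lnormp p w a)%E.
Proof.
move=> hs ht.
set K := [seq k <- iota 0 n | (s k < i)%N].
set e := map s K ++ map (fun j => (i + t j)%N) (iota 0 n).
have uK : uniq (map s K) by rewrite map_inj_uniq ?filter_uniq ?iota_uniq // .
have ue : uniq e.
  rewrite cat_uniq uK map_inj_uniq ?iota_uniq /=; last by move=> x y /addnI /ht.
  rewrite andbT; apply/hasPn => x /mapP [j _ ->]; apply/negP => /mapP [k]; rewrite mem_filter => /andP[hk _] ej.
  by move: hk; rewrite -ej ltnNge leq_addr.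
have rK : (size K <= i)%N.
  have := @uniq_leq_size _ _ (iota 0 i) uK; rewrite size_map size_iota; apply.
  by move=> x /mapP [k]; rewrite mem_filter => /andP[hk _] ->; rewrite mem_iota.
have H1 : \sum_(0 <= k < n) `|(fun j => if (j < i)%N then a j else 0) (s k)| `^ p * w k
   <= \sum_(0 <= m < size K) `|a (nth 0%N e m)| `^ p * w m.
  rewrite /index_iota subn0 (sum_split _ _ (fun k => (s k < i)%N)).
  rewrite [X in _ + X]big1_seq ?addr0; last first.
    move=> k /andP[_]; rewrite mem_filter => /andP[hk _] /=; rewrite (negbTE hk) normr0 powR0 ?mul0r //.
    by rewrite gt_eqF // (lt_le_trans ltr01 p1).
  rewrite (eq_big_seq (fun k => `|a (s k)| `^ p * w k)); last first.
    by move=> k; rewrite mem_filter => /andP[hk _] /=; rewrite hk.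
  apply: (le_trans (filt_le _ (fun k => `|a (s k)| `^ p) n (fun k => powR_ge0 _ _))).
  rewrite le_eqVlt; apply/orP; left; apply/eqP; apply: eq_big_nat => m /andP[_ hm].
  by rewrite nth_cat size_map hm (nth_map 0%N).
have H2 : \sum_(0 <= k < n) `|a (i + t k)%N| `^ p * w (i + k)%N
   <= \sum_(size K <= m < size K + n) `|a (nth 0%N e m)| `^ p * w m.
  rewrite -{1}[size K]add0n big_addn addKn.
  apply: ler_sum_nat => m /andP[_ hm].
  rewrite nth_cat size_map ltnNge leq_addl /= addnK (nth_map 0%N) ?size_iota // nth_iota // add0n.
  apply: ler_wpM2l; first exact: powR_ge0.
  by apply: w_anti; rewrite addnC leq_add2r.
have se : size e = (size K + n)%N by rewrite size_cat !size_map size_iota.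
apply: (@le_trans _ _ ((\sum_(0 <= m < size e) `|a (sg m)| `^ p * w m)%:E)).
  rewrite lee_fin; apply: le_trans (uniq_le _ ue); rewrite se [leRHS](big_cat_nat (n := size K)) ?leq_addr //=.
  exact: lerD.
rewrite lnorm_eq; apply: ser_ge => k; apply: mulr_ge0; [exact: powR_ge0|exact: w0'].
Qed.

Lemma ser_ge0 (u : nat -> R) : (forall k, 0 <= u k) -> (0 <= \sum_(k <oo) (u k)%:E)%E.
Proof. by move=> u0; have := ser_ge u 0 u0; rewrite big_geq. Qed.

Lemma SSt i : (S_ p w a i + St_ p w a i <= lnormp p w a)%E.
Proof.
rewrite /S_ /St_ /lnormp; apply: sup_add.
- exact: La_fin.
- by eexists; exists id => //; exists id.
- by eexists; exists id => //; exists id.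
- move=> _ [s _ <-]; apply: ser_ge0 => k; apply: mulr_ge0; [exact: powR_ge0|exact: w0'].
- move=> _ [s _ <-]; apply: ser_ge0 => k; apply: mulr_ge0; [exact: powR_ge0|exact: w0'].
move=> _ _ [s bs <-] [t bt <-].
rewrite -nneseriesD; first last.
- by move=> k _ _; rewrite lee_fin; apply: mulr_ge0; [exact: powR_ge0|exact: w0'].
- by move=> k _ _; rewrite lee_fin; apply: mulr_ge0; [exact: powR_ge0|exact: w0'].
rewrite (eq_eseriesr (g := fun k => (`|(fun j => if (j < i)%N then a j else 0) (s k)| `^ p * w k
   + `|a (i + t k)%N| `^ p * w (i + k)%N)%:E)); last by move=> k _; rewrite EFinD.
apply: ser_le.
  by move=> k; apply: addr_ge0; apply: mulr_ge0; (exact: powR_ge0 || exact: w0').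
move=> n; rewrite big_split /=.
by apply: pair_part; exact: bij_inj.
Qed.
End G.

Theorem mainTheorem10 (R : realType) (p : R) (w a : nat -> R) (i : nat) :
  1 <= p -> weight_seq w -> in_Lpw p w a -> (0 < i)%N ->
  [/\ (S_ p w a i + St_ p w a i <= lnormp p w a)%E,
      lnormp p w a = (H_ p w a i + Ht_ p w a i)%E,
      lnormp p w a = (W_ p w a i + Wt_ p w a i)%E &
      (W_ p w a i + Wt_ p w a i <= S_ p w a i + T_ p w a i)%E].
Proof.
move=> p1 [_ w0 wd _ ws] La _.
split.
- exact: SSt.
- exact: H_eq.
- exact: W_eq.
- rewrite -W_eq //; rewrite lnorm_eq //; exact: WST.
Qed.
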